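(* Assume the setting and hypotheses (a)–(c) below. Suppose $\mathbf{P}_0(\bar x_0)$ is feasible, and define recursively, for all $k\ge0$, $\bar{\mathbf u}^*_k=(\bar u^*_{0|k},\dots,\bar u^*_{N-1|k})$ an optimal solution of $\mathbf{P}_k(\bar x_k)$ and $\bar x_{k+1}=A\bar x_k+B\bar u^*_{0|k}$. Let $\ell_k:=\bar x_k^TQ\bar x_k+(\bar u^*_{0|k})^TR\,\bar u^*_{0|k}+\mathrm{trace}[(Q+K^TRK)\Sigma_k]$ (which equals $\mathbb{E}[x_k^TQx_k+u_k^TRu_k]$ when $x_k=\bar x_k+\Delta x_k$ with $\mathbb{E}[\Delta x_k]=0$, $\mathbb{E}[\Delta x_k\Delta x_k^T]=\Sigma_k$ and $u_k=K\Delta x_k+\bar u^*_{0|k}$). Then $$\limsup_{M\to\infty}\frac{1}{M}\sum_{k=0}^{M-1}\ell_k\le\mathrm{trace}(SW).$$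
   Context: System data: $A\in\mathbb{R}^{n_x\times n_x}$, $B\in\mathbb{R}^{n_x\times n_u}$, feedback gain $K\in\mathbb{R}^{n_u\times n_x}$, $A_K:=A+BK$, noise covariance $W\succeq0$, $Q,R$ positive definite, horizon $N\ge 1$, $S$ the solution of $A_K^TSA_K-S=-Q-K^TRK$. $\bar\Sigma\succeq0$ solves $\bar\Sigma=A_K\bar\Sigma A_K^T+W$. Covariance sequence: $\Sigma_0\succeq 0$ with $\Sigma_0\preceq\bar\Sigma$ (e.g. $\Sigma_0=0$), $\Sigma_{j+1}=A_K\Sigma_jA_K^T+W$. Fix $a\in\mathbb{R}^{n_x}$, $c\in\mathbb{R}^{n_u}$, $b,d>0$, $p_x,p_u\in(0,1)$. For $\Sigma\succeq 0$, $\mathcal{X}(\Sigma)=\{\bar x:\ \exists\, y\ge 0,\ \lambda\in[0,b],\ y^2+a^T\Sigma a\le p_x(b-\lambda)^2,\ |a^T\bar x|\le y+\lambda\}$ and $\mathcal{U}(\Sigma)=\{\bar u:\ \exists\, y\ge 0,\ \lambda\in[0,d],\ y^2+c^TK\Sigma K^Tc\le p_u(d-\lambda)^2,\ |c^T\bar u|\le y+\lambda\}$; terminal set $\bar{\mathcal{X}}_f:=\mathcal{X}(\bar\Sigma)$. Problem $\mathbf{P}_k(\bar x)$: minimize over $\bar{\mathbf u}=(\bar u_0,\dots,\bar u_{N-1})$ the cost $J_k(\bar x,\bar{\mathbf u})=\sum_{l=0}^{N-1}(\bar x_l^TQ\bar x_l+\bar u_l^TR\bar u_l)+\bar x_N^TS\bar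 x_N+\sum_{l=0}^{N-1}\mathrm{trace}[(Q+K^TRK)\Sigma_{k+l}]+\mathrm{trace}(S\Sigma_{k+N})$ subject to $\bar x_0=\bar x$, $\bar x_{l+1}=A\bar x_l+B\bar u_l$, $\bar x_l\in\mathcal{X}(\Sigma_{k+l})$ and $\bar u_l\in\mathcal{U}(\Sigma_{k+l})$ for $l=0,\dots,N-1$, and $\bar x_N\in\bar{\mathcal{X}}_f$. Hypotheses: (a) $Kx\in\mathcal{U}(\Sigma_{k+N})$ for all $x\in\bar{\mathcal{X}}_f$ and all $k\ge0$; (b) all eigenvalues of $A_K$ have modulus $<1$; (c) $A_Kx\in\bar{\mathcal{X}}_f$ for all $x\in\bar{\mathcal{X}}_f$. *)

(* Defs.v *)
From HB Require Import structures.
From mathcomp Require Import all_boot all_order all_algebra.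
From mathcomp Require Import all_classical all_reals all_analysis.
From mathcomp Require Import complex.
Set Implicit Arguments. Unset Strict Implicit. Unset Printing Implicit Defensive.
Import Order.TTheory GRing.Theory Num.Theory.
Local Open Scope ring_scope.

Section Defs.
Variable R : realType.

Definition qf (n : nat) (x : 'cV[R]_n) (M : 'M[R]_n) : R := (x^T *m M *m x) 0 0.

Definition psd (n : nat) (M : 'M[R]_n) : Prop :=
  M^T = M /\ forall x : 'cV[R]_n, 0 <= qf x M.
Definition posdef (n : nat) (M : 'M[R]_n) : Prop :=
  M^T = M /\ forall x : 'cV[R]_n, x != 0 -> 0 < qf x M.
Definition loewner_le (n : nat) (M1 M2 : 'M[R]_n) : Prop := psd (M2 - M1).

Definition schur_stable (n : nat) (M : 'M[R]_n) : Prop :=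
  forall l : R[i], eigenvalue (map_mx (fun r : R => (r%:C)%C) M) l -> `|l| < 1.

Fixpoint Sig (n : nat) (AK W S0 : 'M[R]_n) (j : nat) : 'M[R]_n :=
  match j with
  | O => S0
  | j'.+1 => AK *m Sig AK W S0 j' *m AK^T + W
  end.

Definition inX (n : nat) (a : 'cV[R]_n) (b px : R) (Sg : 'M[R]_n) (x : 'cV[R]_n) : Prop :=
  exists y lam : R, 0 <= y /\ 0 <= lam <= b /\
    y ^+ 2 + qf a Sg <= px * (b - lam) ^+ 2 /\ `|(a^T *m x) 0 0| <= y + lam.

Definition inU (n m : nat) (K : 'M[R]_(m, n)) (c : 'cV[R]_m) (d pu : R)
  (Sg : 'M[R]_n) (u : 'cV[R]_m) : Prop :=
  exists y lam : R, 0 <= y /\ 0 <= lam <= d /\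
    y ^+ 2 + qf c (K *m Sg *m K^T) <= pu * (d - lam) ^+ 2 /\
    `|(c^T *m u) 0 0| <= y + lam.

(* predicted nominal trajectory; only u 0, ..., u (N-1) are ever used *)
Fixpoint traj (n m : nat) (A : 'M[R]_n) (B : 'M[R]_(n, m)) (x : 'cV[R]_n)
  (u : nat -> 'cV[R]_m) (l : nat) : 'cV[R]_n :=
  match l with
  | O => x
  | l'.+1 => A *m traj A B x u l' + B *m u l'
  end.

Section Problem.
Variables (n m N : nat) (A : 'M[R]_n) (B : 'M[R]_(n, m)) (K : 'M[R]_(m, n))
  (Q S W S0 Sbar : 'M[R]_n) (Rc : 'M[R]_m)
  (a : 'cV[R]_n) (c : 'cV[R]_m) (b d px pu : R).

Let AK := A + B *m K.
Let Sg := Sig AK W S0.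

Definition Jcost (k : nat) (x : 'cV[R]_n) (u : nat -> 'cV[R]_m) : R :=
  \sum_(l < N) (qf (traj A B x u l) Q + qf (u l) Rc)
  + qf (traj A B x u N) S
  + \sum_(l < N) \tr ((Q + K^T *m Rc *m K) *m Sg (k + l))
  + \tr (S *m Sg (k + N)).

Definition feasible (k : nat) (x : 'cV[R]_n) (u : nat -> 'cV[R]_m) : Prop :=
  (forall l, (l < N)%N ->
     inX a b px (Sg (k + l)) (traj A B x u l) /\ inU K c d pu (Sg (k + l)) (u l))
  /\ inX a b px Sbar (traj A B x u N).

Definition optimal (k : nat) (x : 'cV[R]_n) (u : nat -> 'cV[R]_m) : Prop :=
  feasible k x u /\ forall v, feasible k x v -> Jcost k x u <= Jcost k x v.

End Problem.
End Defs.

(* Main.v *)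
Require Import Defs.
From HB Require Import structures.
From mathcomp Require Import all_boot all_order all_algebra.
From mathcomp Require Import all_classical all_reals all_analysis.
From mathcomp Require Import complex.
From mathcomp Require Import lra.
Import Order.TTheory GRing.Theory Num.Theory.
Set Implicit Arguments. Unset Strict Implicit. Unset Printing Implicit Defensive.
Local Open Scope ring_scope.

Section PC.
Variable R : realType.
Local Notation C := (R[i]).
Definition nc (z : C) : R := Normc.normc z.

Lemma nc_ge0 z : 0 <= nc z.
Proof. by case: z => a b; rewrite /nc /Normc.normc sqrtr_ge0. Qed.

Lemma ncD z w : nc (z + w) <= nc z + nc w.
Proof. exact: le_normcD. Qed.

Lemma ncM z w : nc (z * w) = nc z * nc w.
Proof. exact: Normc.normcM. Qed.

Lemma nc0 : nc 0 = 0.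
Proof. exact: Normc.normc0. Qed.

Lemma ncR (r : R) : nc (r%:C)%C = `|r|.
Proof. by rewrite /nc /Normc.normc /= expr0n /= addr0 sqrtr_sqr. Qed.

Lemma nc_lt1 (z : C) : `|z| < 1 -> nc z < 1.
Proof. by move=> h; rewrite -(ltcR (R:=R)); exact: h. Qed.

Definition t0 (s : nat -> C) := forall e : R, 0 < e ->
  exists J, forall j, (J <= j)%N -> nc (s j) < e.

Lemma rec_t0 (z : C) (s : nat -> C) : nc z < 1 ->
  t0 (fun j => s j.+1 - z * s j) -> t0 s.
Proof.
move=> hz ht e e0.
set r := nc z.
have r0 : 0 <= r by exact: nc_ge0.
set h := e * (1 - r) / 2.
have h0 : 0 < h by rewrite /h divr_gt0 // mulr_gt0 // subr_gt0.
have [J HJ] := ht h h0.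
have step : forall j, (J <= j)%N -> nc (s j.+1) <= h + r * nc (s j).
  move=> j Hj.
  have -> : s j.+1 = (s j.+1 - z * s j) + z * s j by rewrite subrK.
  apply: (le_trans (ncD _ _)); rewrite ncM.
  by apply: lerD => //; apply: ltW; apply: HJ.
have stepA : forall j, (J <= j)%N -> nc (s j) < e -> nc (s j.+1) < e.
  move=> j Hj hs; apply: (le_lt_trans (step j Hj)).
  have : r * nc (s j) <= r * e by apply: ler_wpM2l => //; apply: ltW.
  rewrite /h; move: hz; rewrite -/r => hz.
  have : r * e < e by rewrite gtr_pMl.
  move=> h1 h2; lra.
have stepB : forall j, (J <= j)%N -> e <= nc (s j) -> nc (s j.+1) <= nc (s j) - h.
  move=> j Hj hs; apply: (le_trans (step j Hj)).
  have : (1 - r) * e <= (1 - r) * nc (s j) by apply: ler_wpM2l => //; rewrite subr_ge0 ltW.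
  rewrite /h; lra.
have claim : forall k, nc (s (J + k)%N) < e \/ nc (s (J + k)%N) <= nc (s J) - k%:R * h.
  elim=> [|k IH]; first by right; rewrite addn0 mul0r subr0.
  rewrite addnS; case: IH => [hl|hr].
    by left; apply: stepA => //; exact: leq_addr.
  case: (ltP (nc (s (J + k)%N)) e) => hle.
    by left; apply: stepA => //; exact: leq_addr.
  right; apply: (le_trans (stepB _ (leq_addr _ _) hle)).
  rewrite -natr1 mulrDl mul1r; lra.
set k0 := Num.Def.archi_bound (nc (s J) / h).
have hk0 : nc (s J) / h < k0%:R by apply: archi_boundP; rewrite divr_ge0 // ?nc_ge0 // ltW.
have hk0' : nc (s J) < k0%:R * h by rewrite -ltr_pdivrMr.
have left0 : nc (s (J + k0)%N) < e.
  case: (claim k0) => // hr.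
  have := nc_ge0 (s (J + k0)%N); lra.
exists (J + k0)%N => j Hj.
rewrite -(subnKC Hj); elim: (j - (J + k0))%N => [|i IH]; first by rewrite addn0.
rewrite addnS; apply: stepA => //.
by rewrite -addnA leq_addr.
Qed.


Section PCM.
Variable p : nat.
Definition opm (z : C) (s : nat -> 'M[C]_p) : nat -> 'M[C]_p :=
  fun j => s j.+1 - z *: s j.
Definition Fm (rs : seq C) (s : nat -> 'M[C]_p) := foldr opm s rs.

Lemma Fm_t0 (rs : seq C) (s : nat -> 'M[C]_p) :
  (forall z, z \in rs -> nc z < 1) ->
  (forall i k, t0 (fun j => Fm rs s j i k)) -> forall i k, t0 (fun j => s j i k).
Proof.
elim: rs => [|z rs IH] hrs hF //=.
apply: IH => [w hw|i k]; first by apply: hrs; rewrite in_cons hw orbT.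
apply: (@rec_t0 z); first by apply: hrs; rewrite in_cons eqxx.
have := hF i k; rewrite /t0 /= /opm => H e e0; have [J HJ] := H e e0.
by exists J => j Hj; have := HJ j Hj; rewrite !mxE.
Qed.
End PCM.
Arguments opm {p}.
Arguments Fm {p}.

Lemma Fm_pow (p : nat) (G : 'M[C]_p.+1) (rs : seq C) (M : 'M[C]_p.+1) j :
  Fm rs (fun j => G ^+ j *m M) j = G ^+ j *m ((\prod_(z <- rs) (G - z%:M)) *m M).
Proof.
move: j; elim: rs => [|z rs IH] j /=; first by rewrite big_nil mul1mx.
rewrite /opm !IH big_cons exprSr -!mulmxE -!mulmxA.
rewrite scalemxAr -mulmxBr; congr (_ *m _).
by rewrite mulmxBl mul_scalar_mx.
Qed.

Lemma char_split (p : nat) (G : 'M[C]_p) :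
  {rs : seq C | char_poly G = \prod_(z <- rs) ('X - z%:P)}.
Proof.
have [rs Hrs] := closed_field_poly_normal (char_poly G).
by exists rs; rewrite Hrs (monicP (char_poly_monic G)) scale1r.
Qed.

Lemma pow_t0 (p : nat) (G : 'M[R]_p.+1) :
  (forall l : C, eigenvalue (map_mx (fun r : R => (r%:C)%C) G) l -> `|l| < 1) ->
  forall i k (e : R), 0 < e -> exists J, forall j, (J <= j)%N -> `|(G ^+ j) i k| < e.
Proof.
move=> hs i k e e0.
set Gc := map_mx (fun r : R => (r%:C)%C) G.
have [rs Hrs] := char_split Gc.
have hrs : forall z, z \in rs -> nc z < 1.
  move=> z hz; apply: nc_lt1; apply: hs.
  by rewrite eigenvalue_root_char Hrs root_prod_XsubC.
have hprod : \prod_(z <- rs) (Gc - z%:M) = 0.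
  have := Cayley_Hamilton Gc; rewrite Hrs rmorph_prod /=.
  by under eq_bigr => z _ do rewrite rmorphB /= horner_mx_X horner_mx_C.
have H0 : forall i k, t0 (fun j => Fm rs (fun j => Gc ^+ j *m 1%:M) j i k).
  move=> i' k' e' e'0; exists 0%N => j _.
  by rewrite Fm_pow hprod mul0mx mulmx0 mxE nc0.
have [J HJ] := Fm_t0 hrs H0 i k e0.
exists J => j Hj; have := HJ j Hj.
by rewrite mulmx1 /Gc -rmorphXn mxE ncR.
Qed.
End PC.

Section QF.
Variable R : realType.
Local Open Scope classical_set_scope.

Lemma qf_mxD n (x : 'cV[R]_n) (M1 M2 : 'M[R]_n) : qf x (M1 + M2) = qf x M1 + qf x M2.
Proof. by rewrite /qf mulmxDr mulmxDl mxE. Qed.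

Lemma qf_mxN n (x : 'cV[R]_n) (M : 'M[R]_n) : qf x (- M) = - qf x M.
Proof. by rewrite /qf mulmxN mulNmx mxE. Qed.

Lemma qf_mxB n (x : 'cV[R]_n) (M1 M2 : 'M[R]_n) : qf x (M1 - M2) = qf x M1 - qf x M2.
Proof. by rewrite qf_mxD qf_mxN. Qed.

Lemma qf_mul n p (G : 'M[R]_(n, p)) (x : 'cV[R]_p) (M : 'M[R]_n) :
  qf (G *m x) M = qf x (G^T *m M *m G).
Proof. by rewrite /qf trmx_mul !mulmxA. Qed.

Lemma qf0 n (M : 'M[R]_n) : qf 0 M = 0.
Proof. by rewrite /qf mulmx0 mxE. Qed.

Lemma qf_pd n (M : 'M[R]_n) x : posdef M -> 0 <= qf x M.
Proof.
move=> [_ H]; case: (eqVneq x 0) => [->|/H/ltW //]; by rewrite qf0.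
Qed.

Lemma qf_dim0 (x : 'cV[R]_0) (M : 'M[R]_0) : qf x M = 0.
Proof. by rewrite /qf mxE big_ord0. Qed.

Lemma cvg_sum0 p (f : 'I_p -> nat -> R) :
  (forall k, f k j @[j --> \oo] --> 0) -> (\sum_(k < p) f k j) @[j --> \oo] --> 0.
Proof.
elim: p f => [|p IH] f hf.
  by under eq_fun do rewrite big_ord0; exact: cvg_cst.
under eq_fun do rewrite big_ord_recr /=.
suff: (\sum_(i < p) f (widen_ord (leqnSn p) i) j + f ord_max j) @[j --> \oo] --> 0 + 0.
  by rewrite addr0.
apply: cvgD.
  by apply: (IH (fun k j => f (widen_ord (leqnSn p) k) j)) => k; exact: hf.
exact: hf.
Qed.

Lemma S_psd n (G : 'M[R]_n) (S QK : 'M[R]_n) :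
  schur_stable G -> G^T *m S *m G - S = - QK -> (forall x, 0 <= qf x QK) ->
  forall x, 0 <= qf x S.
Proof.
case: n G S QK => [|p] G S QK hs hL hQ x; first by rewrite qf_dim0.
case: (leP 0 (qf x S)) => // hneg; exfalso.
pose y j := G ^+ j *m x.
have hGSG : G^T *m S *m G = S - QK by rewrite -hL addrC subrK.
have mono : forall j, qf (y j) S <= qf x S.
  elim=> [|j IH]; first by rewrite /y expr0 mul1mx.
  apply: (le_trans _ IH).
  rewrite /y exprS -mulmxE -mulmxA qf_mul hGSG qf_mxB.
  by rewrite lerBlDr lerDl.
have hpow : forall i k, (G ^+ j) i k @[j --> \oo] --> 0.
  move=> i k; apply/cvgr0Pnorm_lt => e e0.
  have [J HJ] := pow_t0 hs i k e0.
  by exists J => // j /= Hj; apply: HJ.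
have hy : forall a, (y j) a 0 @[j --> \oo] --> 0.
  move=> a; rewrite /y; under eq_fun do rewrite mxE.
  apply: cvg_sum0 => k; rewrite -(mul0r (x k 0)).
  exact: cvgMr_tmp.
have hq : qf (y j) S @[j --> \oo] --> 0.
  rewrite /qf; under eq_fun do rewrite mxE.
  apply: cvg_sum0 => b; rewrite -(mul0r 0); apply: cvgM; last exact: hy.
  under eq_fun do rewrite mxE.
  apply: cvg_sum0 => a; under eq_fun do rewrite mxE.
  rewrite -(mul0r (S a b)); exact: cvgMr_tmp.
have /cvgr0Pnorm_lt/(_ (- qf x S)) := hq.
rewrite oppr_gt0 => /(_ hneg) [J _ HJ].
have := HJ J (leqnn J); have := mono J.
move: (qf (y J) S) => v hv; rewrite ltr_norml; lra.
Qed.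

End QF.

Section PB.
Variable R : realType.

Lemma psd_add n (P1 P2 : 'M[R]_n) : psd P1 -> psd P2 -> psd (P1 + P2).
Proof.
move=> [t1 h1] [t2 h2]; split.
  apply/matrixP => a b; rewrite !mxE.
  by move/matrixP: t1 => /(_ a b); move/matrixP: t2 => /(_ a b); rewrite !mxE => -> ->.
by move=> x; rewrite qf_mxD addr_ge0.
Qed.

Lemma psd_cong n (G P : 'M[R]_n) : psd P -> psd (G *m P *m G^T).
Proof.
move=> [t h]; split; first by rewrite !trmx_mul trmxK t mulmxA.
by move=> x; have := h (G^T *m x); rewrite qf_mul trmxK.
Qed.

Lemma psd_Sig n (G W S0 : 'M[R]_n) : psd W -> psd S0 -> forall j, psd (Sig G W S0 j).
Proof.
move=> hW hS0; elim=> [|j IH] //=.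
by apply: psd_add => //; apply: psd_cong.
Qed.

Lemma psd_gap n (G W S0 Sbar : 'M[R]_n) : Sbar = G *m Sbar *m G^T + W ->
  loewner_le S0 Sbar -> forall j, psd (Sbar - Sig G W S0 j).
Proof.
move=> hSb hle; elim=> [|j IH] //=.
have -> : Sbar - (G *m Sig G W S0 j *m G^T + W) = G *m (Sbar - Sig G W S0 j) *m G^T.
  rewrite mulmxBr mulmxBl.
  by rewrite [in LHS]hSb opprD addrACA subrr addr0.
exact: psd_cong.
Qed.

Definition bf n (x y : 'cV[R]_n) (M : 'M[R]_n) := (x^T *m M *m y) 0 0.

Lemma qf_addv n (x y : 'cV[R]_n) M :
  qf (x + y) M = qf x M + bf x y M + bf y x M + qf y M.
Proof.
rewrite /qf /bf.
have -> : (x + y)^T = x^T + y^T by apply/matrixP => a b; rewrite !mxE.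
rewrite !mulmxDl !mulmxDr ?mulmxDl [in LHS]mxE [X in X + _ = _]mxE [X in _ + X = _]mxE.
lra.
Qed.

Lemma qf_subv n (x y : 'cV[R]_n) M :
  qf (x - y) M = qf x M - bf x y M - bf y x M + qf y M.
Proof.
rewrite /qf /bf.
have -> : (x - y)^T = x^T - y^T by apply/matrixP => a b; rewrite !mxE.
rewrite !mulmxBl !mulmxBr ?mulmxBl.
set a1 := x^T *m M *m x; set a2 := x^T *m M *m y; set a3 := y^T *m M *m x.
set a4 := y^T *m M *m y; rewrite !mxE; lra.
Qed.

Lemma bf_delta n (i k : 'I_n) (M : 'M[R]_n) :
  bf (delta_mx i 0) (delta_mx k 0) M = M i k.
Proof. by rewrite /bf trmx_delta -rowE -colE !mxE. Qed.

Lemma qf_delta n (i : 'I_n) (M : 'M[R]_n) : qf (delta_mx i 0) M = M i i.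
Proof. exact: bf_delta. Qed.

Lemma entry_bound n (P Sb : 'M[R]_n) : psd P -> psd (Sb - P) ->
  forall i k, `|P i k| <= Sb i i + Sb k k.
Proof.
move=> [tP hP] [_ hG] i k.
have sym : P k i = P i k by rewrite -[in LHS]tP mxE.
have h1 := hP (delta_mx i 0 + delta_mx k 0).
have h2 := hP (delta_mx i 0 - delta_mx k 0).
rewrite qf_addv !bf_delta !qf_delta sym in h1.
rewrite qf_subv !bf_delta !qf_delta sym in h2.
have h3 := hG (delta_mx i 0); have h4 := hG (delta_mx k 0).
rewrite qf_mxB !qf_delta in h3; rewrite qf_mxB !qf_delta in h4.
have h5 := hP (delta_mx i 0); have h6 := hP (delta_mx k 0).
rewrite !qf_delta in h5 h6.
rewrite ler_norml; apply/andP; split; lra.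
Qed.

Definition beta n (F Sb : 'M[R]_n) := \sum_i \sum_k `|F i k| * (Sb k k + Sb i i).

Lemma trace_lb n (F P Sb : 'M[R]_n) : psd P -> psd (Sb - P) ->
  - beta F Sb <= \tr (F *m P).
Proof.
move=> hP hG; rewrite /beta /mxtrace -sumrN; apply: ler_sum => i _.
rewrite mxE -sumrN; apply: ler_sum => k _.
have hb := entry_bound hP hG k i.
have : `|F i k * P k i| <= `|F i k| * (Sb k k + Sb i i).
  by rewrite normrM ler_wpM2l.
by rewrite ler_norml => /andP[].
Qed.

Lemma inX_mono n (a : 'cV[R]_n) b px (S1 S2 : 'M[R]_n) x :
  qf a S2 <= qf a S1 -> inX a b px S1 x -> inX a b px S2 x.
Proof.
move=> hle [y [lam [hy [hlam [h1 h2]]]]]; exists y, lam; do !split => //.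
lra.
Qed.

End PB.

Section Step.
Variable R : realType.
Variables (n m N' : nat) (A : 'M[R]_n) (B : 'M[R]_(n, m)) (K : 'M[R]_(m, n))
  (Q S W S0 Sbar : 'M[R]_n) (Rc : 'M[R]_m)
  (a : 'cV[R]_n) (c : 'cV[R]_m) (b d px pu : R).
Local Notation G := (A + B *m K).
Local Notation Sg := (Sig (A + B *m K) W S0).
Local Notation N := N'.+1.
Hypothesis hL : G^T *m S *m G - S = - Q - K^T *m Rc *m K.
Hypothesis hgap : forall j, qf a (Sg j) <= qf a Sbar.
Hypothesis ha : forall x k, inX a b px Sbar x -> inU K c d pu (Sg (k + N)) (K *m x).
Hypothesis hc : forall x, inX a b px Sbar x -> inX a b px Sbar (G *m x).

Definition cand (x : 'cV[R]_n) (u : nat -> 'cV[R]_m) : nat -> 'cV[R]_m :=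
  fun l => if (l < N')%N then u l.+1 else K *m traj A B x u N.

Lemma traj_cand x u l : (l <= N')%N ->
  traj A B (A *m x + B *m u 0%N) (cand x u) l = traj A B x u l.+1.
Proof.
elim: l => [|l IH] hl //=.
by rewrite IH ?(ltnW hl) // /cand hl.
Qed.

Lemma traj_cand_N x u :
  traj A B (A *m x + B *m u 0%N) (cand x u) N = G *m traj A B x u N.
Proof.
rewrite [LHS]/= traj_cand // /cand ltnn.
by rewrite mulmxDl mulmxA.
Qed.

Lemma feas_cand k x u : feasible N A B K W S0 Sbar a c b d px pu k x u ->
  feasible N A B K W S0 Sbar a c b d px pu k.+1 (A *m x + B *m u 0%N) (cand x u).
Proof.
move=> [hl ht]; split; last by rewrite traj_cand_N; apply: hc.
move=> l hlN; case: (ltnP l N') => hlt.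
  rewrite traj_cand ?(ltnW hlt) // /cand hlt addSnnS.
  exact: hl.
have el : l = N' by apply/eqP; rewrite eqn_leq hlt andbT -ltnS.
subst l; rewrite traj_cand // /cand ltnn addSnnS; split.
  exact: inX_mono (hgap _) ht.
exact: ha.
Qed.

Lemma cost_cand k x u :
  Jcost N A B K Q S W S0 Rc k.+1 (A *m x + B *m u 0%N) (cand x u) =
  Jcost N A B K Q S W S0 Rc k x u
  - (qf x Q + qf (u 0%N) Rc + \tr ((Q + K^T *m Rc *m K) *m Sg k)) + \tr (S *m W).
Proof.
rewrite /Jcost.
set x' := A *m x + B *m u 0%N.
set QK := Q + K^T *m Rc *m K.
set S1 := \sum_(l < N') (qf (traj A B x u l.+1) Q + qf (u l.+1) Rc).
set xN := traj A B x u N.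
have e1 : \sum_(l < N) (qf (traj A B x' (cand x u) l) Q + qf (cand x u l) Rc)
    = S1 + (qf xN Q + qf (K *m xN) Rc).
  rewrite big_ord_recr /=; congr (_ + _).
    apply: eq_bigr => l _ /=; rewrite traj_cand ?(ltnW (ltn_ord l)) //.
    by rewrite /cand ltn_ord.
  by rewrite traj_cand // /cand ltnn.
have e2 : \sum_(l < N) (qf (traj A B x u l) Q + qf (u l) Rc)
    = qf x Q + qf (u 0%N) Rc + S1.
  by rewrite big_ord_recl /=.
have hGSG : G^T *m S *m G = S + (- Q - K^T *m Rc *m K) by rewrite -hL addrCA subrr addr0.
have e3 : qf (traj A B x' (cand x u) N) S = qf xN S - qf xN Q - qf (K *m xN) Rc.
  rewrite traj_cand_N qf_mul hGSG qf_mxD qf_mxB qf_mxN qf_mul -/xN.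
  lra.
set T1 := \sum_(l < N') \tr (QK *m Sg (k + l.+1)).
set P := Sg (k + N).
have e4 : \sum_(l < N) \tr (QK *m Sg (k.+1 + l)) = T1 + \tr (QK *m P).
  rewrite big_ord_recr; congr (_ + _); last by rewrite addSnnS.
  by apply: eq_bigr => l _; rewrite addSnnS.
have e5 : \sum_(l < N) \tr (QK *m Sg (k + l)) = \tr (QK *m Sg k) + T1.
  by rewrite big_ord_recl addn0.
have e6 : \tr (S *m Sg (k.+1 + N)) = \tr (S *m P) - \tr (QK *m P) + \tr (S *m W).
  rewrite addSn /= -/P mulmxDr mxtraceD; congr (_ + _).
  rewrite !mulmxA mxtrace_mulC !mulmxA hGSG mulmxDl mxtraceD.
  rewrite -opprD mulNmx raddfN /=.
  done.
rewrite e1 e2 e3 e4 e5 e6; lra.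
Qed.

End Step.

Theorem mainTheorem4 (R : realType) (n m N : nat)
  (A : 'M[R]_n) (B : 'M[R]_(n, m)) (K : 'M[R]_(m, n))
  (W Q S Sbar S0 : 'M[R]_n) (Rc : 'M[R]_m)
  (a : 'cV[R]_n) (c : 'cV[R]_m) (b d px pu : R)
  (x0 : 'cV[R]_n) (xb : nat -> 'cV[R]_n) (us : nat -> nat -> 'cV[R]_m) :
  (1 <= N)%N ->
  psd W -> posdef Q -> posdef Rc ->
  (A + B *m K)^T *m S *m (A + B *m K) - S = - Q - K^T *m Rc *m K ->
  psd Sbar -> Sbar = (A + B *m K) *m Sbar *m (A + B *m K)^T + W ->
  psd S0 -> loewner_le S0 Sbar ->
  0 < b -> 0 < d -> 0 < px < 1 -> 0 < pu < 1 ->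
  (* hypothesis (a) *)
  (forall x k, inX a b px Sbar x ->
     inU K c d pu (Sig (A + B *m K) W S0 (k + N)) (K *m x)) ->
  (* hypothesis (b) *)
  schur_stable (A + B *m K) ->
  (* hypothesis (c) *)
  (forall x, inX a b px Sbar x -> inX a b px Sbar ((A + B *m K) *m x)) ->
  (* P_0(x0) feasible *)
  (exists u, feasible N A B K W S0 Sbar a c b d px pu 0 x0 u) ->
  (* closed loop with optimal solutions *)
  xb 0%N = x0 ->
  (forall k, optimal N A B K Q S W S0 Sbar Rc a c b d px pu k (xb k) (us k)) ->
  (forall k, xb k.+1 = A *m xb k + B *m us k 0%N) ->
  (limn_esup (fun M : nat =>
    ((M%:R)^-1 * \sum_(k < M)
       (qf (xb k) Q + qf (us k 0%N) Rc
        + \tr ((Q + K^T *m Rc *m K) *m Sig (A + B *m K) W S0 k)))%:E)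
  <= (\tr (S *m W))%:E)%E.
Proof.
case: N => [//|N'] _ hW hQ hR hL hSb hSbeq hS0 hle hb hd hpx hpu ha hs hc _ _ hopt hxb.
set G := A + B *m K in hL hSbeq ha hs hc *.
set QK := Q + K^T *m Rc *m K.
set ell := fun k => qf (xb k) Q + qf (us k 0%N) Rc + \tr (QK *m Sig G W S0 k).
set V := fun k => Jcost N'.+1 A B K Q S W S0 Rc k (xb k) (us k).
have hPsd := psd_Sig G hW hS0.
have hGap := psd_gap hSbeq hle.
have hgap : forall j, qf a (Sig G W S0 j) <= qf a Sbar.
  by move=> j; have [_ /(_ a)] := hGap j; rewrite qf_mxB subr_ge0.
have hSpsd : forall x, 0 <= qf x S.
  apply: (S_psd (QK := QK) hs); first by rewrite hL opprD.
  by move=> x; rewrite /QK qf_mxD -qf_mul addr_ge0 // qf_pd.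
have hrec : forall k, V k.+1 <= V k - ell k + \tr (S *m W).
  move=> k; have [hfk _] := hopt k; have [_ hmin] := hopt k.+1.
  have hf' := feas_cand hgap ha hc hfk.
  rewrite hxb in hmin; have := hmin _ hf'; rewrite /V hxb.
  by rewrite (cost_cand N' W S0 hL).
set Cst := N'.+1%:R * beta QK Sbar + beta S Sbar.
have hV : forall k, - Cst <= V k.
  move=> k; rewrite /V /Jcost.
  have h1 : 0 <= \sum_(l < N'.+1) (qf (traj A B (xb k) (us k) l) Q + qf (us k l) Rc).
    by apply: sumr_ge0 => l _; rewrite addr_ge0 // qf_pd.
  have h2 := hSpsd (traj A B (xb k) (us k) N'.+1).
  have h3 : - (N'.+1%:R * beta QK Sbar) <=
      \sum_(l < N'.+1) \tr (QK *m Sig G W S0 (k + l)).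
    apply: (@le_trans _ _ (\sum_(l < N'.+1) (- beta QK Sbar))).
      by rewrite sumr_const card_ord mulNrn mulr_natl.
    by apply: ler_sum => l _; apply: trace_lb.
  have h4 : - beta S Sbar <= \tr (S *m Sig G W S0 (k + N'.+1)) by apply: trace_lb.
  rewrite /Cst; lra.
have hsum : forall M, \sum_(k < M) ell k <= V 0%N - V M + M%:R * \tr (S *m W).
  elim=> [|M IH]; first by rewrite big_ord0 subrr mul0r addr0.
  rewrite big_ord_recr /= -natr1 mulrDl mul1r.
  have := hrec M; lra.
have hD : 0 <= V 0%N + Cst by have := hV 0%N; lra.
set D := V 0%N + Cst.
apply/lee_addgt0Pr => e e0.
rewrite /limn_esup limf_esupE.
set J := (Num.Def.archi_bound (D / e)).+1.
apply: ge_ereal_inf; eexists.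
  by exists [set j : nat | (J <= j)%N]%classic; [exists J | reflexivity].
apply: ge_ereal_sup => y [j hj <-].
rewrite -EFinD lee_fin.
have hJj : (J <= j)%N := hj.
have hjR : 0 < j%:R :> R by rewrite ltr0n; apply: leq_trans hJj.
have hB : D / e < (Num.Def.archi_bound (D / e))%:R.
  by apply: archi_boundP; rewrite divr_ge0 // ltW.
have hJR : (Num.Def.archi_bound (D / e))%:R < j%:R :> R by rewrite ltr_nat.
have hDe : D < j%:R * e.
  by rewrite -ltr_pdivrMr //; apply: lt_trans hB hJR.
have hsj := hsum j; have hv := hV j.
rewrite ler_pdivrMl // mulrDr.
rewrite /D in hDe; lra.
Qed.
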